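(* Let $m\mid n$, $s=n/m$, $\alpha$ a primitive element of $\mathbb{F}_{q^n}$, $l$ an integer with $1\le l<\frac{q^n-1}{q^m-1}$, $L$ the degree of the minimal polynomial of $\alpha^l$ over $\mathbb{F}_{q^m}$, and $\mathcal{F}=(\mathcal{F}_1,\dots,\mathcal{F}_r)$, $r\ge2$, the flag of type $(ms_1,\dots,ms_r)$ with $1\le s_1<\dots<s_r\le L$, $s_r<s$, and $\mathcal{F}_i=\bigoplus_{j=0}^{s_i-1}\mathbb{F}_{q^m}\alpha^{lj}$. Then: (1) $d_f(\mathrm{Orb}(\mathcal{F}))=2m$ if and only if the type of $\mathcal{F}$ is $(ms_1,mL)$ (so $r=2$, $s_2=L$) for some $1\le s_1<L<s$. Moreover, if in this case $s_1=1$, then $\mathcal{F}=(\mathbb{F}_{q^m},\mathbb{F}_{q^{mL}})$ is the Galois flag of type $(m,mL)$. (2) $\mathrm{Orb}(\mathcal{F})$ is an optimum distance flag code if and only if $L=s$ and the type of $\mathcal{F}$ is $(m,m(L-1))$. In this case $\mathrm{Orb}(\mathcal{F})$ is a generalized Galois flag code with the largest possible size $\frac{q^n-1}{q^m-1}$.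
   Context: $q$ prime power; subspaces are $\mathbb{F}_q$-subspaces of $\mathbb{F}_{q^n}$; a flag is a chain $\{0\}\subsetneq\mathcal{F}_1\subsetneq\cdots\subsetneq\mathcal{F}_r\subsetneq\mathbb{F}_{q^n}$ with type its vector of dimensions. $d_S(\mathcal{U},\mathcal{V})=\dim(\mathcal{U}+\mathcal{V})-\dim(\mathcal{U}\cap\mathcal{V})$, $d_f(\mathcal{F},\mathcal{F}')=\sum_i d_S(\mathcal{F}_i,\mathcal{F}'_i)$, $\mathrm{Orb}(\mathcal{F})=\{\mathcal{F}\alpha^j:j\ge0\}$ where $\mathcal{F}\alpha^j=(\mathcal{F}_1\alpha^j,\dots,\mathcal{F}_r\alpha^j)$; the minimum distance of a code is the minimum $d_f$ between distinct codewords. A flag code of type $(t_1,\dots,t_r)$ is an optimum distance flag code if its minimum distance equals $2(\sum_{t_i\le\lfloor n/2\rfloor}t_i+\sum_{t_i>\lfloor n/2\rfloor}(n-t_i))$. The Galois flag of type $(t_1,\dots,t_r)$ (with $t_i\mid t_{i+1}$, $t_i\mid n$) is $(\mathbb{F}_{q^{t_1}},\dots,\mathbb{F}_{q^{t_r}})$. A generalized Galois flag is a flag having at least one subspace that is a subfield of $\mathbb{F}_{q^n}$ and at least one that is not; a generalized Galois flag code is its orbit. *)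

(* Defs.v *)
From HB Require Import structures.
From mathcomp Require Import all_boot all_order all_algebra all_field.
Set Implicit Arguments. Unset Strict Implicit. Unset Printing Implicit Defensive.
Import GRing.Theory.
Local Open Scope ring_scope.

(* Setting: F = F_q (a finite field), L : fieldExtType F plays F_{q^n},
   subspaces are F-subspaces {vspace L}, flags are seq {vspace L}. *)

Section FlagDefs.
Variables (F : finFieldType) (L : fieldExtType F).

Definition dS (U V : {vspace L}) : nat := (\dim (U + V) - \dim (U :&: V))%N.

Definition df (G G' : seq {vspace L}) : nat :=
  \sum_(p <- zip G G') dS p.1 p.2.

Definition flag_type (G : seq {vspace L}) : seq nat := [seq \dim U | U <- G].

Definition vmul (U : {vspace L}) (a : L) : {vspace L} := prodv U <[a]>%VS.
Definition flag_mul (G : seq {vspace L}) (a : L) : seq {vspace L} :=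
  [seq vmul U a | U <- G].

Definition in_orb (a : L) (G H : seq {vspace L}) : Prop :=
  exists j : nat, H = flag_mul G (a ^+ j).

Definition min_dist (C : seq {vspace L} -> Prop) (d : nat) : Prop :=
  (exists G H, [/\ C G, C H, G <> H & df G H = d]) /\
  (forall G H, C G -> C H -> G <> H -> (d <= df G H)%N).

Definition code_size (C : seq {vspace L} -> Prop) (N : nat) : Prop :=
  exists s : seq (seq {vspace L}),
    [/\ uniq s, (forall G, G \in s <-> C G) & size s = N].

Definition od_bound (n : nat) (t : seq nat) : nat :=
  2 * \sum_(ti <- t) (if (ti <= n./2)%N then ti else n - ti)%N.

Definition optimum_distance (n : nat) (G : seq {vspace L})
    (C : seq {vspace L} -> Prop) : Prop :=
  min_dist C (od_bound n (flag_type G)).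

Definition is_subfield (U : {vspace L}) : Prop :=
  exists E : {subfield L}, U = (E : {vspace L}).

Definition gen_galois_flag (G : seq {vspace L}) : Prop :=
  (exists2 U, U \in G & is_subfield U) /\ (exists2 U, U \in G & ~ is_subfield U).

Definition primitive_elt (a : L) : Prop :=
  let Q := (#|F| ^ \dim {:L})%N in
  a ^+ (Q - 1) = 1 /\ forall k : nat, (0 < k < Q - 1)%N -> a ^+ k != 1.

Definition flag_sub (K : {subfield L}) (a : L) (l si : nat) : {vspace L} :=
  let gens : seq L := [seq a ^+ (l * j)%N | j <- iota 0 si] in
  prodv (K : {vspace L}) (span gens).

Definition the_flag (K : {subfield L}) (a : L) (l : nat) (ss : seq nat)
  : seq {vspace L} := [seq flag_sub K a l si | si <- ss].

End FlagDefs.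

(* Main.v *)
Require Import Defs.
From HB Require Import structures.
From mathcomp Require Import all_boot all_order all_algebra all_field.
From mathcomp Require Import zify.
From Stdlib Require Import Lia.
Set Implicit Arguments. Unset Strict Implicit. Unset Printing Implicit Defensive.
Import GRing.Theory.
Local Open Scope ring_scope.

Section W.
Variables (F0 : finFieldType) (L : fieldExtType F0) (K : {subfield L}).

Definition W (b : L) (k : nat) : {vspace L} :=
  prodv (K : {vspace L}) (span [seq b ^+ j | j <- iota 0 k]).

Lemma flag_subE a l k : flag_sub K a l k = W (a ^+ l) k.
Proof. by rewrite /flag_sub /W; congr (prodv _ (span _)); apply: eq_map => j; rewrite exprM. Qed.

Variable b : L.
Local Notation n0 := (adjoin_degree (asval K) b).

Lemma W_S k : W b k.+1 = (W b k + (K * <[b ^+ k]>))%VS.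
Proof. by rewrite /W -addn1 iotaD map_cat span_cat prodvDr /= add0n span_seq1. Qed.

Lemma KW k : (K * W b k <= W b k)%VS.
Proof. by rewrite /W prodvA prodv_id. Qed.

Lemma memW_K k c v : c \in K -> v \in W b k -> c * v \in W b k.
Proof. move=> Kc Wv; exact: (subvP (KW k)) (memv_mul Kc Wv). Qed.

Lemma W_pow i k : (i < k)%N -> b ^+ i \in W b k.
Proof.
move=> ik; rewrite -[b ^+ i]mul1r; apply: memv_mul; first exact: mem1v.
by apply: memv_span; apply: map_f; rewrite mem_iota.
Qed.

Lemma W_poly k v : v \in W b k ->
  exists2 p, p \is a polyOver K & (size p <= k)%N /\ v = p.[b].
Proof.
elim: k v => [|k IH] v.
  rewrite /W /= span_nil prodv0 memv0 => /eqP->.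
  by exists 0; rewrite ?polyOver0 ?size_poly0 ?horner0.
rewrite W_S => /memv_addP[u Wu [w /memv_cosetP[y Ky ->] ->]].
have [p Kp [szp ->]] := IH u Wu.
exists (p + y *: 'X^k).
  by rewrite rpredD // polyOverZ ?rpredX ?polyOverX.
split; last by rewrite hornerD hornerZ hornerXn.
apply: leq_trans (size_polyD _ _) _; rewrite geq_max (leq_trans szp) //.
by apply: leq_trans (size_scale_leq _ _) _; rewrite size_polyXn.
Qed.

Lemma poly_W k p : p \is a polyOver K -> (size p <= k)%N -> p.[b] \in W b k.
Proof.
move=> Kp szp; rewrite (horner_coef_wide _ szp); apply: rpred_sum => i _.
by apply: memW_K; [exact: (polyOverP Kp) | exact: W_pow].
Qed.


Lemma W_notin k : (k < n0)%N -> b ^+ k \notin W b k.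
Proof.
move=> kn; apply/negP => /W_poly[p Kp [szp Dp]].
have Kq : 'X^k - p \is a polyOver K by rewrite rpredB ?rpredX ?polyOverX.
have szq : size ('X^k - p) = k.+1.
  by rewrite size_polyDl size_polyXn // size_polyN ltnS.
have := @root_small_adjoin_poly _ _ K b _ Kq; rewrite szq => /(_ kn).
rewrite /root !hornerE -Dp subrr eqxx => /esym /eqP q0.
by move: szq; rewrite q0 size_poly0.
Qed.

Lemma b_neq0 : (1 < n0)%N -> b != 0.
Proof. by move=> h; apply: contraTneq h => ->; rewrite adjoin0_deg. Qed.

Lemma dimW k : (k <= n0)%N -> \dim (W b k) = (k * \dim K)%N.
Proof.
elim: k => [|k IH] kn.
  by rewrite /W /= span_nil prodv0 dimv0.
have kn' : (k < n0)%N by [].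
have nzbk : b ^+ k != 0.
  by apply: contraNneq (W_notin kn') => ->; rewrite mem0v.
rewrite W_S dimv_disjoint_sum; last first.
apply/eqP; rewrite -subv0; apply/subvP=> z /memv_capP[Wz /memv_cosetP[y Ky Dz]].
rewrite memv0; apply/eqP; move: Dz Wz => -> Wz.
have [->|nzy] := eqVneq y 0; first by rewrite mul0r.
have := W_notin kn'; rewrite -[b ^+ k](mulKf nzy) memW_K //.
by rewrite rpredV.
by rewrite IH 1?ltnW // dim_cosetv // mulSn addnC.
Qed.

Lemma W_stab k g : (0 < k < n0)%N -> (forall v, v \in W b k -> v * g \in W b k) ->
  g \in K.
Proof.
case/andP=> k0 kn stab.
have W1 : 1 \in W b k by rewrite -(expr0 b) W_pow.
have [p Kp [szp Dg]] := W_poly (stab 1 W1); rewrite mul1r in Dg.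
have [sp1|] := leqP (size p) 1.
  by rewrite Dg (size1_polyC sp1) hornerC (polyOverP Kp).
move=> sp1; exfalso.
have [e Ee] : exists e, size p = e.+1 by exists (size p).-1; rewrite prednK //; lia.
have ek : (k - e < k)%N by lia.
have [h Kh [szh Dh]] := W_poly (stab _ (W_pow ek)).
have p0 : p != 0 by rewrite -size_poly_eq0; lia.
have Kq : p * 'X^(k - e) - h \is a polyOver K.
  by rewrite rpredB ?rpredM ?rpredX ?polyOverX.
have ek2 : (e < k)%N by lia.
have E1 : (k - e + e.+1 = k.+1)%N by rewrite addnS subnK // ltnW.
have S1 : size (p * 'X^(k - e)) = k.+1 by rewrite size_mulXn // Ee E1.
have szq : size (p * 'X^(k - e) - h) = k.+1.
  by rewrite size_polyDl S1 // size_polyN ltnS.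
have := @root_small_adjoin_poly _ _ K b _ Kq; rewrite szq => /(_ kn).
rewrite /root hornerD hornerN hornerM hornerXn -Dg -Dh [g * _]mulrC subrr eqxx.
move=> /esym /eqP q0.
by move: szq; rewrite q0 size_poly0.
Qed.

Lemma W_full : W b n0 = <<K; b>>%VS.
Proof.
apply/eqP; rewrite eqEdim dimW // dim_Fadjoin leqnn andbT.
by apply/subvP=> v /W_poly[p Kp [_ ->]]; apply: mempx_Fadjoin.
Qed.

Lemma W1 : W b 1 = K.
Proof. by rewrite /W /= span_seq1 expr0 -/(1%VS) prodv1. Qed.

End W.


Section Gen.
Variables (F0 : finFieldType) (L : fieldExtType F0) (K : {subfield L}).

Implicit Types U V : {vspace L}.
Definition Kcl (U : {vspace L}) := (K * U <= U)%VS.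

Lemma Kcl_mem U c u : Kcl U -> c \in K -> u \in U -> c * u \in U.
Proof. by move=> KU Kc Uu; apply: (subvP KU); apply: memv_mul. Qed.

Lemma Kcl_vmul U g : Kcl U -> Kcl (vmul U g).
Proof. by move=> KU; rewrite /Kcl /vmul prodvA prodvSl. Qed.

Lemma dS_same U : dS U U = 0%N.
Proof. by rewrite /dS addvv capvv subnn. Qed.

Lemma dS_ge U V : Kcl U -> Kcl V -> \dim U = \dim V -> U <> V ->
  (2 * \dim K <= dS U V)%N.
Proof.
move=> KU KV dUV nUV.
have nsub : ~~ (U <= V)%VS.
  apply/negP => sUV; apply: nUV; apply/eqP; by rewrite eqEdim sUV dUV leqnn.
have [u Uu nVu] := subvPn nsub.
have nzu : u != 0 by apply: contraNneq nVu => ->; rewrite mem0v.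
set C := (U :&: V)%VS.
have dis : (C :&: (K * <[u]>) = 0)%VS.
  apply/eqP; rewrite -subv0; apply/subvP=> z /memv_capP[Cz /memv_cosetP[y Ky Dz]].
  rewrite memv0; apply/eqP; move: Cz; rewrite Dz => /memv_capP[_ Vyu].
  have [->|nzy] := eqVneq y 0; first by rewrite mul0r.
  case/negP: nVu; rewrite -[u](mulKf nzy); apply: Kcl_mem => //.
  by rewrite rpredV.
have sub : (C + K * <[u]> <= U)%VS.
  rewrite subv_add capvSl /=; apply: subv_trans KU; apply: prodvSr.
  by rewrite -memvE.
have := dimvS sub; rewrite dimv_disjoint_sum // dim_cosetv // => h.
have := dimv_sum_cap U V; rewrite /dS -/C; clearbody C; move: h dUV; clear; move=> h1 h2 h3. set a := \dim U in h1 h2 h3 *. set c := \dim C in h1 h2 h3 *. set d := \dim (U + V) in h1 h2 h3 *. set k := \dim K in h1 h2 h3 *. clearbody a c d k. lia.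
Qed.

Lemma vmulK U c : Kcl U -> c \in K -> c != 0 -> vmul U c = U.
Proof.
move=> KU Kc nzc; apply/eqP; rewrite eqEdim /vmul dim_cosetv // leqnn andbT.
apply/subvP=> z /memv_cosetP[u Uu ->]; rewrite mulrC; exact: Kcl_mem.
Qed.

Lemma vmulM U a c : vmul (vmul U a) c = vmul U (a * c).
Proof. by rewrite /vmul -prodvA prodv_line. Qed.

Lemma vmul1 U : vmul U 1 = U.
Proof. by rewrite /vmul -/(1%VS) prodv1. Qed.

Lemma dim_vmul U g : g != 0 -> \dim (vmul U g) = \dim U.
Proof. exact: dim_cosetv. Qed.

Lemma df_map (T : Type) (f g : T -> {vspace L}) s :
  df (map f s) (map g s) = (\sum_(x <- s) dS (f x) (g x))%N.
Proof. by elim: s => [|x s IH]; rewrite /df ?big_nil //= !big_cons -IH. Qed.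

End Gen.

Lemma sum_ge (T : eqType) (F : T -> nat) s x : x \in s -> (F x <= \sum_(y <- s) F y)%N.
Proof.
elim: s => [//|y s IH]; rewrite inE big_cons => /orP[/eqP->|/IH h]; first exact: leq_addr.
exact: leq_trans h (leq_addl _ _).
Qed.


Section FF.
Variables (F0 : finFieldType) (L : fieldExtType F0).
Local Notation G := (finvect_type L).

Lemma cardV (V : {vspace L}) : #|[pred x : G | x \in V]| = (#|F0| ^ \dim V)%N.
Proof. exact: (@card_vspace F0 G _ V). Qed.

Lemma cardG : #|G| = (#|F0| ^ \dim {:L})%N.
Proof. rewrite -cardV; apply: eq_card => x; by rewrite inE memvf. Qed.

Variable K : {subfield L}.
Local Notation M := (#|F0| ^ \dim K)%N.

Lemma M_gt1 : (1 < M)%N.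
Proof.
have := finNzRing_gt1 F0; have := adim_gt0 K; move: (#|F0|) (\dim K) => a b.
by move=> hb ha; rewrite -(exp1n b) ltn_exp2r.
Qed.

Lemma claimA (x : L) : x \in K -> x != 0 -> x ^+ (M - 1) = 1.
Proof.
move=> Kx nzx.
pose A := [pred y : G | (y \in K) && (y != 0)].
have cA : #|A| = (M - 1)%N.
  have := cardV K; rewrite (cardD1 0) inE mem0v /= => <-.
  rewrite add1n subn1 /=.
  by apply: eq_card => y; rewrite !inE andbC.
have bij : bijective (fun y : G => (x : G) * y).
  by exists (fun y : G => x^-1 * y) => y /=; rewrite ?mulKf ?mulVKf.
have e : \prod_(y in A) y = \prod_(j | A ((x : G) * j)) ((x : G) * j).
  exact: (reindex _ (onW_bij _ bij)).
have eA : (fun j : G => A (x * j)) =1 A.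
  move=> j; rewrite /A /= mulf_eq0 negb_or nzx /=.
  case: (boolP (j \in K)) => Kj; first by rewrite memvM.
  apply/negP => /andP[Kxj _]; case/negP: Kj.
  by rewrite -[j](mulKf nzx) memvM // memvV.
rewrite (eq_bigl _ _ eA) big_split prodr_const cA /= in e.
have nz : \prod_(y in A) y != 0 :> G by apply/prodf_neq0 => y /andP[].
by apply/eqP; rewrite -(can_eq (mulfK nz)) mul1r -e.
Qed.


Lemma claimB (y : L) : y ^+ (M - 1) = 1 -> y \in K.
Proof.
move=> hy; apply/negPn/negP => nKy.
pose A := [pred z : G | (z \in K) && (z != 0)].
have cA : #|A| = (M - 1)%N.
  have := cardV K; rewrite (cardD1 0) inE mem0v /= => <-.
  rewrite add1n subn1 /=.
  by apply: eq_card => z; rewrite !inE andbC.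
pose P : {poly G} := 'X^(M - 1) - 1.
have M1 : (0 < M - 1)%N by have := M_gt1; lia.
have szP : size P = (M - 1).+1 by rewrite size_XnsubC.
have P0 : P != 0 by rewrite -size_poly_eq0 szP.
suff [Ha Hu] : all (root P) ((y : G) :: enum A) /\ uniq ((y : G) :: enum A).
  by have := max_poly_roots P0 Ha Hu; rewrite szP /= -cardE cA ltnn.
split; last by rewrite /= enum_uniq andbT mem_enum inE negb_and nKy.
rewrite /= /root !hornerE hy subrr eqxx /=.
apply/allP => z; rewrite mem_enum => /andP[Kz nz].
by rewrite /root !hornerE claimA // subrr.
Qed.
End FF.


Lemma path_le_last x s : path ltn x s -> forall y, y \in x :: s -> (y <= last x s)%N.
Proof.
elim: s x => [|z s IH] x /=; first by move=> _ y; rewrite inE => /eqP->.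
case/andP=> xz pz y; rewrite inE => /orP[/eqP->|ys].
  apply: leq_trans (ltnW xz) _; apply: IH => //; exact: mem_head.
exact: IH.
Qed.

Lemma sum_eq_le (T : eqType) (g h : T -> nat) s :
  (forall x, x \in s -> g x <= h x)%N ->
  (\sum_(x <- s) h x <= \sum_(x <- s) g x)%N ->
  forall x, x \in s -> g x = h x.
Proof.
elim: s => [//|y s IH] le; rewrite !big_cons => hs x.
have ley := le y (mem_head _ _).
have les : forall x, x \in s -> (g x <= h x)%N by move=> z zs; apply: le; rewrite inE zs orbT.
have hs2 : (\sum_(x <- s) g x <= \sum_(x <- s) h x)%N by rewrite big_seq [X in (_ <= X)%N]big_seq; apply: leq_sum => z zs; apply: les.
move: hs ley hs2 (IH les); move: (\sum_(x <- s) g x) (\sum_(x <- s) h x) => a b.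
move=> h1 h2 h3 IH'; rewrite inE => /orP[/eqP->|xs].
  by apply/eqP; rewrite eqn_leq h2 /=; lia.
by apply: IH' => //; lia.
Qed.

Section Main.
Variables (F0 : finFieldType) (L : fieldExtType F0) (m : nat) (K : {subfield L})
  (alpha : L) (l : nat).
Local Notation n := (\dim {:L}).
Local Notation b := (alpha ^+ l).
Local Notation n0 := (adjoin_degree (asval K) (alpha ^+ l)).
Local Notation WW := (W K (alpha ^+ l)).
Hypotheses (m0 : (0 < m)%N) (dK : \dim K = m) (anz : alpha != 0).

Lemma bnz : b != 0. Proof. by rewrite expf_neq0. Qed.

Lemma dist_beta x : (0 < x < n0)%N -> dS (WW x) (vmul (WW x) b) = (2 * m)%N.
Proof.
case/andP=> x0 xn.
have sum : (WW x + vmul (WW x) b)%VS = WW x.+1.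
  apply/eqP; rewrite eqEsubv; apply/andP; split.
    rewrite subv_add; apply/andP; split; first by rewrite W_S addvSl.
    apply/subvP => z /memv_cosetP[v Wv ->].
    have [p Kp [szp ->]] := W_poly Wv.
    rewrite -hornerMX; apply: poly_W; first by rewrite rpredM ?polyOverX.
    by apply: leq_trans (size_mul_leq _ _) _; rewrite size_polyX addn2 /= ltnS.
  rewrite W_S subv_add addvSl /=; apply: subv_trans (addvSr _ _).
  apply/subvP => z /memv_cosetP[y Ky ->].
  rewrite -(prednK x0) exprSr mulrA.
  apply: memv_mul; last exact: memv_line.
  by apply: memW_K => //; apply: W_pow; rewrite prednK.
have := dimv_sum_cap (WW x) (vmul (WW x) b).
rewrite sum /dS dim_vmul ?bnz // !dimW ?(ltnW xn) // dK.
move: (\dim (_ :&: _)) => c; rewrite sum dimW // => h.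
move: h; rewrite dK !mulSn; move: (x * m)%N => z; lia.
Qed.


Lemma fix_full : vmul (WW n0) b = WW n0.
Proof.
rewrite W_full; apply/eqP; rewrite eqEdim dim_vmul ?bnz // leqnn andbT.
by apply: (@prodv_sub _ _ _ _ (<<K; b>>%AS)) => //; rewrite -memvE memv_adjoin.
Qed.

Lemma comp_eq x g1 g2 : g1 != 0 -> (0 < x < n0)%N ->
  vmul (WW x) g1 = vmul (WW x) g2 -> g2 / g1 \in K.
Proof.
move=> nz1 xr e; apply: (W_stab xr) => v Wv.
have : v * g2 \in vmul (WW x) g2 by apply: memv_mul; rewrite ?memv_line.
rewrite -e => /memv_cosetP[w Ww E]; by rewrite mulrA E mulfK.
Qed.

Lemma flag_mulE ss g : flag_mul (the_flag K alpha l ss) g = [seq vmul (WW x) g | x <- ss].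
Proof. by rewrite /flag_mul /the_flag -map_comp; apply: eq_map => x /=; rewrite flag_subE. Qed.

Lemma the_flagE ss : the_flag K alpha l ss = map WW ss.
Proof. by apply: eq_map => x; rewrite flag_subE. Qed.

Lemma flag_mulK ss c g : c \in K -> c != 0 ->
  flag_mul (the_flag K alpha l ss) (c * g) = flag_mul (the_flag K alpha l ss) g.
Proof.
move=> Kc nzc; rewrite !flag_mulE; apply: eq_map => x.
by rewrite -vmulM (@vmulK _ _ K (WW x) c) //; rewrite /Kcl; apply: KW.
Qed.

Lemma orb_comp_neq ss i j x : (0 < x < n0)%N ->
  flag_mul (the_flag K alpha l ss) (alpha ^+ i) <> flag_mul (the_flag K alpha l ss) (alpha ^+ j) ->
  vmul (WW x) (alpha ^+ i) <> vmul (WW x) (alpha ^+ j).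
Proof.
move=> xr nG e; apply: nG.
have nzi : alpha ^+ i != 0 by rewrite expf_neq0.
have nzj : alpha ^+ j != 0 by rewrite expf_neq0.
have Kd := comp_eq nzi xr e.
have nzd : alpha ^+ j / alpha ^+ i != 0 by rewrite mulf_neq0 ?invr_eq0.
by rewrite -[alpha ^+ j](divfK nzi) flag_mulK.
Qed.

Lemma comp_dS x i j :
  vmul (WW x) (alpha ^+ i) <> vmul (WW x) (alpha ^+ j) ->
  (2 * m <= dS (vmul (WW x) (alpha ^+ i)) (vmul (WW x) (alpha ^+ j)))%N.
Proof.
move=> ne; rewrite -dK; apply: dS_ge => //; try by apply: Kcl_vmul; rewrite /Kcl; apply: KW.
by rewrite !dim_vmul ?expf_neq0.
Qed.

End Main.


Lemma ord_pow (R : ringType) (a : R) (P : nat) : (0 < P)%N -> a ^+ P = 1 ->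
  (forall k, (0 < k < P)%N -> a ^+ k != 1) -> forall k, (a ^+ k == 1) = (P %| k)%N.
Proof.
move=> P0 aP prim k; apply/eqP/idP => [ak|/dvdnP[c ->]]; last first.
  by rewrite mulnC exprM aP expr1n.
have : a ^+ (k %% P)%N = 1.
  by move: ak; rewrite {1}(divn_eq k P) exprD mulnC exprM aP expr1n mul1r.
rewrite /dvdn; case: (posnP (k %% P)%N) => [->//|kp] e.
by have := prim (k %% P)%N; rewrite kp ltn_mod P0 e eqxx => /(_ isT).
Qed.

Section NT.
Variables (F0 : finFieldType) (L : fieldExtType F0) (K : {subfield L}) (a : L) (P : nat).
Local Notation M := (#|F0| ^ \dim K)%N.
Hypotheses (P0 : (0 < P)%N) (aP : a ^+ P = 1)
  (prim : forall k, (0 < k < P)%N -> a ^+ k != 1) (dvd : (M - 1 %| P)%N).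

Lemma inK_iff t : (a ^+ t \in K) = ((P %/ (M - 1)) %| t)%N.
Proof.
have M1 : (0 < M - 1)%N by have := M_gt1 K; lia.
have eP : P = (P %/ (M - 1) * (M - 1))%N by rewrite divnK.
have anz : a != 0.
  apply/eqP => a0; move: aP; rewrite a0 expr0n gtn_eqF //= => /eqP.
  by rewrite eq_sym oner_eq0.
apply/idP/idP => [Kt | /dvdnP[c ->]].
  have := claimA Kt (expf_neq0 _ anz); rewrite -exprM => /eqP.
  rewrite (ord_pow P0 aP prim) {1}eP.
  by rewrite dvdn_pmul2r.
apply: claimB; rewrite -exprM; apply/eqP; rewrite (ord_pow P0 aP prim).
by rewrite -mulnA -eP dvdn_mull.
Qed.

End NT.


Section Thm.
Variables (F0 : finFieldType) (L : fieldExtType F0) (m : nat) (K : {subfield L})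
  (alpha : L) (l : nat) (ss : seq nat).
Local Notation n := (\dim {:L}).
Local Notation b := (alpha ^+ l).
Local Notation n0 := (adjoin_degree (asval K) (alpha ^+ l)).
Local Notation WW := (W K (alpha ^+ l)).
Local Notation Fl := (the_flag K alpha l ss).
Hypotheses (m0 : (0 < m)%N) (dK : \dim K = m) (anz : alpha != 0)
  (ss_pos : forall x, x \in ss -> (0 < x)%N) (ss_le : forall x, x \in ss -> (x <= n0)%N)
  (x1 : nat) (rest : seq nat) (ssE : ss = x1 :: rest) (x1n0 : (x1 < n0)%N).

Lemma Fl_orb : in_orb alpha Fl Fl.
Proof.
exists 0%N; rewrite flag_mulE the_flagE; apply: eq_map => x.
by rewrite expr0 vmul1.
Qed.

Lemma Flb_orb : in_orb alpha Fl (flag_mul Fl b).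
Proof. by exists l. Qed.

Lemma Fl_neq : Fl <> flag_mul Fl b.
Proof.
rewrite flag_mulE the_flagE ssE /= => -[e].
have x10 : (0 < x1)%N by apply: ss_pos; rewrite ssE mem_head.
have := W_notin x1n0; rewrite e => /negP nin _; apply: nin.
rewrite -(prednK x10) exprSr; apply: memv_mul; last exact: memv_line.
by apply: W_pow; rewrite prednK.
Qed.

Lemma df_Flb : df Fl (flag_mul Fl b) =
  (\sum_(x <- ss) (if (x < n0)%N then 2 * m else 0))%N.
Proof.
rewrite flag_mulE the_flagE df_map; apply: eq_big_seq => x xs.
case: ifP => xn; first by apply: dist_beta => //; rewrite ss_pos.
have -> : x = n0 by apply/eqP; rewrite eqn_leq ss_le // leqNgt xn.
by rewrite fix_full // dS_same.
Qed.

Lemma df_orb i j : df (flag_mul Fl (alpha ^+ i)) (flag_mul Fl (alpha ^+ j)) =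
  (\sum_(x <- ss) dS (vmul (WW x) (alpha ^+ i)) (vmul (WW x) (alpha ^+ j)))%N.
Proof. by rewrite !flag_mulE df_map. Qed.

Lemma LB G H : in_orb alpha Fl G -> in_orb alpha Fl H -> G <> H -> (2 * m <= df G H)%N.
Proof.
move=> [i ->] [j ->] ne; rewrite df_orb.
case: (boolP (all (fun x => vmul (WW x) (alpha ^+ i) == vmul (WW x) (alpha ^+ j)) ss)).
  move=> /allP h; case: ne; rewrite !flag_mulE; apply/eq_in_map => x xs.
  exact/eqP/h.
case/allPn => x xs /eqP nx; apply: leq_trans (sum_ge _ xs); exact: comp_dS.
Qed.


End Thm.

Unset Implicit Arguments.
Section NatL.
Local Open Scope nat_scope.

Lemma f_ge m s x : 0 < m -> 0 < x -> x < s ->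
  m <= (if m * x <= (s * m)./2 then m * x else s * m - m * x).
Proof. by move=> *; case: ifP => _; nia. Qed.

Lemma f_eq m s x : 0 < m -> 0 < x -> x < s ->
  (if m * x <= (s * m)./2 then m * x else s * m - m * x) = m -> x = 1 \/ x = s - 1.
Proof. by move=> ? ? ?; case: ifP => _ e; nia. Qed.

Lemma f_one m s : 0 < m -> 2 < s ->
  (if m * 1 <= (s * m)./2 then m * 1 else s * m - m * 1) = m.
Proof. by move=> *; rewrite geq_half_double -muln2 ifT //; nia. Qed.

Lemma f_last m s : 0 < m -> 2 < s ->
  (if m * (s - 1) <= (s * m)./2 then m * (s - 1) else s * m - m * (s - 1)) = m.
Proof. by move=> *; rewrite geq_half_double -muln2 ifF //; nia. Qed.

End NatL.
Set Implicit Arguments.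

Unset Implicit Arguments.

Theorem mainTheorem8 (F : finFieldType) (L : fieldExtType F)
  (m : nat) (K : {subfield L}) (alpha : L) (l : nat) (ss : seq nat) :
  let q := #|F| in
  let n := \dim {:L} in
  let s := (n %/ m)%N in
  let Ldeg := (size (minPoly K (alpha ^+ l))).-1 in
  let r := size ss in
  let Fl := the_flag K alpha l ss in
  let Orb := in_orb alpha Fl in
  (0 < m)%N -> (m %| n)%N -> \dim K = m ->
  primitive_elt alpha ->
  (1 <= l)%N -> (l < (q ^ n - 1) %/ (q ^ m - 1))%N ->
  (2 <= r)%N -> sorted ltn ss -> (1 <= nth 0 ss 0)%N ->
  (last 0 ss <= Ldeg)%N -> (last 0 ss < s)%N ->
  (* (1) *)
  ((min_dist Orb (2 * m) <-> flag_type Fl = [:: m * nth 0 ss 0; m * Ldeg]%N)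
   /\ (flag_type Fl = [:: m * nth 0 ss 0; m * Ldeg]%N -> nth 0 ss 0 = 1%N ->
       exists E : {subfield L},
         \dim E = (m * Ldeg)%N /\ Fl = [:: (K : {vspace L}); (E : {vspace L})]))
  /\
  (* (2) *)
  ((optimum_distance n Fl Orb <->
      Ldeg = s /\ flag_type Fl = [:: m; m * (Ldeg - 1)]%N)
   /\ (optimum_distance n Fl Orb ->
       gen_galois_flag Fl /\ code_size Orb ((q ^ n - 1) %/ (q ^ m - 1))%N)).
Proof.
move=> q n s Ldeg r Fl Orb.
rewrite {}/Orb {}/Fl {}/r {}/Ldeg {}/s {}/n {}/q size_minPoly succnK.
move=> m0 mn dK [aQ aprim] l1 lN.
set n0 := adjoin_degree K (alpha ^+ l).
case: ss => [|x1 [|x2 rest]] // _ srt s1 lastL lasts.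
rewrite /= in srt s1 lastL lasts.
set ss := x1 :: x2 :: rest.
have nth1 : nth 0%N ss 0 = x1 by [].
rewrite nth1.
have srt' : path ltn x1 (x2 :: rest) by [].
have mem_le : forall y, y \in ss -> (y <= last x2 rest)%N.
  by move=> y ys; apply: (path_le_last srt').
have mem_ge : forall y, y \in ss -> (x1 <= y)%N.
  move=> y; rewrite inE => /orP[/eqP->//|ys].
  by have /allP := order_path_min ltn_trans srt' => /(_ y ys) /ltnW.
have ss_pos : forall y, y \in ss -> (0 < y)%N by move=> y /mem_ge; lia.
have ss_le : forall y, y \in ss -> (y <= n0)%N by move=> y /mem_le; lia.
have ss_lt : forall y, y \in ss -> (y < \dim {:L} %/ m)%N by move=> y /mem_le; lia.
have x12 : (x1 < x2)%N by case/andP: srt'.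
have x2n0 : (x2 <= n0)%N by apply: ss_le; rewrite !inE eqxx orbT.
have x1n0 : (x1 < n0)%N by lia.
have q2 : (1 < #|F|)%N := finNzRing_gt1 F.
have nm : \dim {:L} = (\dim {:L} %/ m * m)%N by rewrite divnK.
have n1 : (0 < \dim {:L} %/ m)%N by have := ss_lt x1; rewrite mem_head; lia.
set s := (\dim {:L} %/ m)%N in ss_lt n1 nm lasts *.
set Q := (#|F| ^ \dim {:L})%N in aQ aprim *.
have Q1 : (0 < Q - 1)%N.
  have : (1 < Q)%N.
    rewrite /Q -{1}(expn0 #|F|) ltn_exp2l //.
    by rewrite nm muln_gt0 n1 m0.
  lia.
have anz : alpha != 0.
  apply/eqP => a0; move: aQ; rewrite a0 expr0n gtn_eqF //= => /eqP.
  by rewrite eq_sym oner_eq0.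
have ssE : ss = x1 :: x2 :: rest by [].
have ftE : flag_type (the_flag K alpha l ss) = [seq (m * x)%N | x <- ss].
  rewrite /flag_type the_flagE -map_comp; apply/eq_in_map => x xs /=.
  by rewrite dimW ?ss_le // dK mulnC.
have n0s : (n0 <= s)%N.
  have := dimvS (subvf (<<K; alpha ^+ l>>%VS)); rewrite dim_Fadjoin dK nm.
  by rewrite leq_pmul2r.
have LBo := LB dK anz.
have x1r : (0 < x1 < n0)%N by rewrite x1n0 andbT; apply: ss_pos; rewrite mem_head.
have rest0 : x2 = n0 -> rest = [::].
  move=> x2E; case E: rest => [//|y r]; exfalso.
  have yle : (y <= n0)%N by apply: ss_le; rewrite /ss E !inE eqxx !orbT.
  have : (x2 < y)%N by move: srt'; rewrite E /= => /and3P[].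
  lia.
have part1a : min_dist (in_orb alpha (the_flag K alpha l ss)) (2 * m) ->
    rest = [::] /\ x2 = n0.
  case=> [[G [H [[i ->] [j ->] ne e]]] _].
  have [x2n|x2n] := ltnP x2 n0; last first.
    have x2E : x2 = n0 by apply/eqP; rewrite eqn_leq x2n x2n0.
    by split; [apply: rest0|].
  exfalso; move: e; rewrite df_orb ssE !big_cons.
  have x2r : (0 < x2 < n0)%N by rewrite x2n andbT; lia.
  have := comp_dS dK anz (orb_comp_neq anz x1r ne).
  have := comp_dS dK anz (orb_comp_neq anz x2r ne).
  move: (\sum_(_ <- rest) _)%N => R.
  move: (dS _ (vmul _ (alpha ^+ j))) => A.
  move: (dS _ (vmul _ (alpha ^+ j))) => B.
  lia.
have bd_beta : (2 * m <= df (the_flag K alpha l ss) (flag_mul (the_flag K alpha l ss) (alpha ^+ l)))%N.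
  apply: LBo; [exact: Fl_orb | exact: Flb_orb |]. by have := Fl_neq ss_pos ssE x1n0.
have dfb := df_Flb m0 dK anz ss_pos ss_le.
have part1b : flag_type (the_flag K alpha l ss) = [:: (m * x1)%N; (m * n0)%N] ->
    rest = [::] /\ x2 = n0.
  rewrite ftE => e; have := congr1 (fun z => nth 0%N z 1) e.
  rewrite /= => /eqP; rewrite eqn_pmul2l // => /eqP x2E.
  by split; [apply: rest0|].
split.
  split.
    split.
      by move/part1a => [r0 x2E]; rewrite ftE /ss r0 x2E.
    move=> /part1b [r0 x2E]; split.
      exists (the_flag K alpha l ss), (flag_mul (the_flag K alpha l ss) (alpha ^+ l)).
      split; [exact: Fl_orb | exact: Flb_orb | by have := Fl_neq ss_pos ssE x1n0 |].
      by rewrite dfb /ss r0 x2E !big_cons big_nil x1n0 ltnn !addn0.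
    by move=> G H; apply: LBo.
  move=> /part1b [r0 x2E] x11.
  exists (<<K; alpha ^+ l>>%AS); split.
    by rewrite dim_Fadjoin dK mulnC.
  by rewrite the_flagE /ss r0 x2E x11 /= W1 W_full.
pose fval x := (if (m * x <= (s * m)./2)%N then m * x else s * m - m * x)%N.
have odE : od_bound (\dim {:L}) (flag_type (the_flag K alpha l ss)) =
    (\sum_(x <- ss) 2 * fval x)%N.
  rewrite /od_bound ftE big_map big_distrr /=; apply: eq_bigr => x _.
  by rewrite /fval nm.
have part2a : optimum_distance (\dim {:L}) (the_flag K alpha l ss)
    (in_orb alpha (the_flag K alpha l ss)) ->
    [/\ n0 = s, rest = [::], x1 = 1%N & x2 = (s - 1)%N].
  case=> _ lb.
  have h := lb _ _ (Fl_orb K alpha l ss) (Flb_orb K alpha l ss) (Fl_neq ss_pos ssE x1n0).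
  rewrite odE dfb in h.
  have le : forall x, x \in ss ->
      ((fun x => if (x < n0)%N then (2 * m)%N else 0%N) x <= (fun x => (2 * fval x)%N) x)%N.
    move=> x xs /=; have := f_ge m s x m0 (ss_pos x xs) (ss_lt x xs); rewrite -/(fval x).
    by case: ifP => _; move: (fval x) => z; lia.
  have eqs := sum_eq_le le h.
  have P : forall x, x \in ss -> (x < n0)%N /\ (x = 1 \/ x = s - 1)%N.
    move=> x xs; have := eqs _ xs; rewrite /=.
    have fg := f_ge m s x m0 (ss_pos x xs) (ss_lt x xs).
    have fe := f_eq m s x m0 (ss_pos x xs) (ss_lt x xs).
    rewrite -/(fval x) in fg fe.
    case: ltnP => xn e; last by exfalso; move: fg e; move: (fval x) => z; lia.
    split => //; apply: fe; move: e; move: (fval x) => z; lia.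
  have x2ss : x2 \in ss by rewrite !inE eqxx orbT.
  have x2s := ss_lt x2 x2ss.
  have [x1l [e1|e1]] := P x1 (mem_head _ _);
  have [x2l [e2|e2]] := P x2 x2ss; try (exfalso; lia).
  have ns : n0 = s by lia.
  have r0 : rest = [::].
    case E: rest => [//|y r]; exfalso.
    have ys : (y < s)%N by apply: ss_lt; rewrite /ss E !inE eqxx !orbT.
    have : (x2 < y)%N by move: srt'; rewrite E /= => /and3P[].
    lia.
  by [].
have part2b : n0 = s -> flag_type (the_flag K alpha l ss) = [:: m; (m * (n0 - 1))%N] ->
    [/\ rest = [::], x1 = 1%N & x2 = (s - 1)%N].
  move=> ns; rewrite ftE => e.
  have := congr1 (fun z => nth 0%N z 0) e; rewrite /= => /eqP.
  rewrite -{2}(muln1 m) eqn_pmul2l // => /eqP e1.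
  have := congr1 (fun z => nth 0%N z 1) e; rewrite /= => /eqP.
  rewrite eqn_pmul2l // ns => /eqP e2.
  have := congr1 size e; rewrite /= size_map => /eqP; rewrite !eqSS size_eq0 => /eqP r0.
  by [].
split.
  split.
    move=> /part2a [ns r0 e1 e2]; split => //.
    by rewrite ftE /ss r0 e1 e2 ns /= muln1.
  move=> [ns fte]; have [r0 e1 e2] := part2b ns fte.
  have ssE2 : ss = [:: 1%N; (s - 1)%N] by rewrite /ss r0 e1 e2.
  have s3 : (2 < s)%N by lia.
  have xr1 : (0 < 1 < n0)%N by lia.
  have xr2 : (0 < s - 1 < n0)%N by lia.
  rewrite /optimum_distance odE.
  have -> : (\sum_(x <- ss) 2 * fval x)%N = (4 * m)%N.
    by rewrite ssE2 !big_cons big_nil addn0 /fval f_one // f_last //; lia.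
  split.
    exists (the_flag K alpha l ss), (flag_mul (the_flag K alpha l ss) (alpha ^+ l)).
    split; [exact: Fl_orb | exact: Flb_orb | by have := Fl_neq ss_pos ssE x1n0 |].
    by rewrite dfb ssE2 !big_cons big_nil ifT ?ifT; lia.
  move=> G H [i ->] [j ->] ne; rewrite df_orb ssE2 !big_cons big_nil.
  have := comp_dS dK anz (orb_comp_neq anz xr1 ne).
  have := comp_dS dK anz (orb_comp_neq anz xr2 ne).
  move: (dS _ (vmul _ (alpha ^+ j))) => A.
  move: (dS _ (vmul _ (alpha ^+ j))) => B.
  lia.
move=> opt; have [ns r0 e1 e2] := part2a opt.
have ssE2 : ss = [:: 1%N; (s - 1)%N] by rewrite /ss r0 e1 e2.
have s3 : (2 < s)%N by lia.
have xr1 : (0 < 1 < n0)%N by lia.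
have xr2 : (0 < s - 1 < n0)%N by lia.
have FlE : the_flag K alpha l ss = [:: (K : {vspace L}); W K (alpha ^+ l) (s - 1)].
  by rewrite the_flagE ssE2 /= W1.
split.
  rewrite FlE; split.
    by exists (K : {vspace L}); [rewrite mem_head | exists K].
  exists (W K (alpha ^+ l) (s - 1)); first by rewrite !inE eqxx orbT.
  move=> [E eE].
  have bE : alpha ^+ l \in W K (alpha ^+ l) (s - 1).
    by rewrite -{1}(expr1 (alpha ^+ l)); apply: W_pow; lia.
  have bK : alpha ^+ l \in K.
    apply: (@W_stab _ _ K (alpha ^+ l) (s - 1)) => // v.
    rewrite eE in bE * => vE; exact: memvM.
  by move: (adjoin_deg_eq1 K (alpha ^+ l)); rewrite bK -/n0 => /eqP; lia.
have dvd : (#|F| ^ \dim K - 1 %| Q - 1)%N.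
  rewrite dK /Q nm mulnC expnM !subn1; exact: dvdn_pred_predX.
have inKN := inK_iff Q1 aQ aprim dvd.
rewrite dK in inKN.
have QN : (Q - 1 = (Q - 1) %/ (#|F| ^ m - 1) * (#|F| ^ m - 1))%N.
  by rewrite divnK // -dK.
set N := ((Q - 1) %/ (#|F| ^ m - 1))%N in inKN QN *.
have N0 : (0 < N)%N.
  by rewrite lt0n; apply/eqP => N0; move: Q1; rewrite QN N0 mul0n.
exists [seq flag_mul (the_flag K alpha l ss) (alpha ^+ j) | j <- iota 0 N].
split.
- rewrite map_inj_in_uniq ?iota_uniq // => i j.
  rewrite !mem_iota !add0n => /andP[_ iN] /andP[_ jN] e.
  have eh := congr1 (fun z => head 0%VS z) e; rewrite !flag_mulE ssE2 /= in eh.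
  have K1 := comp_eq (expf_neq0 i anz) xr1 eh.
  have K2 := comp_eq (expf_neq0 j anz) xr1 (esym eh).
  case: (ltngtP i j) => // ij; exfalso.
    move: K1; rewrite -expfB // inKN => d.
    have h0 : (0 < j - i)%N by rewrite subn_gt0.
    by move: (dvdn_leq h0 d) jN; clear; lia.
  move: K2; rewrite -expfB // inKN => d.
  have h0 : (0 < i - j)%N by rewrite subn_gt0.
  by move: (dvdn_leq h0 d) iN; clear; lia.
- move=> G; split.
    by move/mapP => [j _ ->]; exists j.
  move=> [j ->]; apply/mapP; exists (j %% N)%N; first by rewrite mem_iota add0n ltn_mod.
  rewrite {1}(divn_eq j N) exprD flag_mulK //; last by rewrite expf_neq0.
  by rewrite inKN dvdn_mull.
- by rewrite size_map size_iota.
Qed.
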